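(* Let $(X,d)$ be a totally bounded metric space with II-modulus of total boundedness $\gamma$, $\emptyset\ne F\subseteq X$ with representation $(\tilde F_k)$, $G,H:\mathbb{R}_+\to\mathbb{R}_+$ with $G$-modulus $\alpha_G$ and $H$-modulus $\beta_H$, and $(\varepsilon_n)$ a sequence in $\mathbb{R}_+$ with $\sum\varepsilon_i<\infty$ and Cauchy modulus $\xi$. Assume (1) $(x_n)$ is uniformly quasi-$(G,H)$-Fej\'er monotone w.r.t. $F$ (and $(\varepsilon_n)$) with modulus $\chi$, and (2) $(x_n)$ has the liminf property w.r.t. $F$ with liminf-bound $\widehat\Phi$. Then $(x_n)$ is Cauchy and for all $k\in\mathbb{N}$ and $g:\mathbb{N}\to\mathbb{N}$ there exists $N\le\widehat\Psi_0(P)$ such that $d(x_i,x_j)\le\frac1{k+1}$ for all $i,j\in[N,N+g(N)]$, where $P:=\gamma(\alpha_G(4\beta_H(2k+1)+3))+1$, $\chi_g(n,r):=\chi(n,g(n),r)$, $\chi^M_g(n,r):=\max\{\chi_g(i,r)\mid i\le n\}$, and $$\widehat\Psi_0(0):=0,\quad \widehat\Psi_0(n+1):=\widehat\Phi\Big(\chi^M_g\big(\widehat\Psi_0(n),4\beta_H(2k+1)+3\big),\ \xi(4\beta_H(2k+1)+3)\Big).$$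
   Context: II-modulus $\gamma$: for every $k$ and every sequence $(y_n)$ in $X$ there are $0\le i<j\le\gamma(k)$ with $d(y_i,y_j)\le\frac1{k+1}$. Representation: $F=\bigcap_k\tilde F_k$, $AF_k:=\bigcap_{l\le k}\tilde F_l$. $G$-modulus: $a\le\frac1{\alpha_G(k)+1}\Rightarrow G(a)\le\frac1{k+1}$; $H$-modulus: $H(a)\le\frac1{\beta_H(k)+1}\Rightarrow a\le\frac1{k+1}$. Cauchy modulus $\xi$: $\sum_{i=\xi(n)}^\infty\varepsilon_i<\frac1{n+1}$ for all $n$. Uniformly quasi-$(G,H)$-Fej\'er monotone with modulus $\chi:\mathbb{N}^3\to\mathbb{N}$: for all $n,m,r\in\mathbb{N}$, all $p\in AF_{\chi(n,m,r)}$ and all $l\le m$, $H(d(x_{n+l},p))<G(d(x_n,p))+\sum_{i=n}^{n+m-1}\varepsilon_i+\frac1{r+1}$. Liminf property w.r.t. $F$: for all $k,n$ there is $N\ge n$ with $x_N\in AF_k$; then $\widehat\varphi_F(k,n):=\min\{m\ge n\mid x_m\in AF_k\}$, and a liminf-bound is any $\widehat\Phi:\mathbb{N}^2\to\mathbb{N}$, monotone in both arguments, with $\widehat\Phi\ge\widehat\varphi_F$ pointwise. *)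

(* Defs.v *)
From Stdlib Require Import Reals Lra Lia.
From Coquelicot Require Import Coquelicot.
Open Scope R_scope.

Definition is_metric {X : Type} (d : X -> X -> R) : Prop :=
  (forall x y, 0 <= d x y) /\
  (forall x y, d x y = 0 <-> x = y) /\
  (forall x y, d x y = d y x) /\
  (forall x y z, d x z <= d x y + d y z).

Definition II_modulus {X : Type} (d : X -> X -> R) (gamma : nat -> nat) : Prop :=
  forall (k : nat) (y : nat -> X),
    exists i j, (i < j)%nat /\ (j <= gamma k)%nat /\ d (y i) (y j) <= / INR (k + 1).

Definition AF {X : Type} (Ft : nat -> X -> Prop) (k : nat) (p : X) : Prop :=
  forall l, (l <= k)%nat -> Ft l p.

Definition G_modulus (G : R -> R) (alphaG : nat -> nat) : Prop :=
  forall k a, 0 <= a -> a <= / INR (alphaG k + 1) -> G a <= / INR (k + 1).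
Definition H_modulus (H : R -> R) (betaH : nat -> nat) : Prop :=
  forall k a, 0 <= a -> H a <= / INR (betaH k + 1) -> a <= / INR (k + 1).

Fixpoint psum (e : nat -> R) (n m : nat) : R :=
  match m with
  | O => 0
  | S m' => psum e n m' + e (n + m')%nat
  end.

Definition cauchy_modulus_series (eps : nat -> R) (xi : nat -> nat) : Prop :=
  forall n, Series (fun i => eps (xi n + i)%nat) < / INR (n + 1).

Definition unif_quasi_GH_fejer {X : Type} (d : X -> X -> R) (Ft : nat -> X -> Prop)
  (G H : R -> R) (eps : nat -> R) (x : nat -> X) (chi : nat -> nat -> nat -> nat) : Prop :=
  forall n m r p, AF Ft (chi n m r) p ->
    forall l, (l <= m)%nat ->
      H (d (x (n + l)%nat) p) < G (d (x n) p) + psum eps n m + / INR (r + 1).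

Definition liminf_property {X : Type} (Ft : nat -> X -> Prop) (x : nat -> X) : Prop :=
  forall k n, exists N, (n <= N)%nat /\ AF Ft k (x N).

Definition is_phihat {X : Type} (Ft : nat -> X -> Prop) (x : nat -> X) (k n m : nat) : Prop :=
  (n <= m)%nat /\ AF Ft k (x m) /\
  (forall m', (n <= m')%nat -> (m' < m)%nat -> ~ AF Ft k (x m')).

Definition liminf_bound {X : Type} (Ft : nat -> X -> Prop) (x : nat -> X)
  (Phi : nat -> nat -> nat) : Prop :=
  (forall k k' n n', (k <= k')%nat -> (n <= n')%nat -> (Phi k n <= Phi k' n')%nat) /\
  (forall k n m, is_phihat Ft x k n m -> (m <= Phi k n)%nat).

Fixpoint chiM (chi : nat -> nat -> nat -> nat) (g : nat -> nat) (n r : nat) : nat :=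
  match n with
  | O => chi O (g O) r
  | S n' => Nat.max (chiM chi g n' r) (chi n (g n) r)
  end.

Fixpoint Psi0 (chi : nat -> nat -> nat -> nat) (g : nat -> nat) (Phi : nat -> nat -> nat)
  (betaH xi : nat -> nat) (k n : nat) : nat :=
  match n with
  | O => O
  | S n' => Phi (chiM chi g (Psi0 chi g Phi betaH xi k n') (4 * betaH (2 * k + 1) + 3)%nat)
                (xi (4 * betaH (2 * k + 1) + 3)%nat)
  end.

Definition cauchy_seq {X : Type} (d : X -> X -> R) (x : nat -> X) : Prop :=
  forall e, 0 < e -> exists N, forall i j, (N <= i)%nat -> (N <= j)%nat -> d (x i) (x j) < e.

(* Main.v *)
Require Import Defs.
From Stdlib Require Import Reals Lra Lia Classical ClassicalEpsilon.
From Coquelicot Require Import Coquelicot.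
Open Scope R_scope.

Lemma S0 : Series (fun _ => 0) = 0.
Proof. rewrite <- (Series_ext (fun n => 0 * 0)); [| intros; ring]. rewrite Series_scal_l. ring. Qed.

Lemma psum_add e a b c : psum e a (b + c) = psum e a b + psum e (a + b) c.
Proof.
  induction c as [|c IH]; simpl.
  - rewrite Nat.add_0_r; ring.
  - rewrite Nat.add_succ_r. simpl. rewrite IH. replace (a + (b + c))%nat with (a + b + c)%nat by lia. ring.
Qed.

Lemma psum_nonneg e a b : (forall n, 0 <= e n) -> 0 <= psum e a b.
Proof. intro He. induction b; simpl; [lra|]. specialize (He (a+b)%nat). lra. Qed.

Lemma psum_sum e s L : psum e s (S L) = sum_f_R0 (fun t => e (s + t)%nat) L.
Proof. induction L; simpl. - ring. - simpl in IHL. rewrite <- IHL. ring. Qed.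

Lemma psum_le_series e s L : (forall n, 0 <= e n) -> ex_series e ->
  psum e s L <= Series (fun t => e (s + t)%nat).
Proof.
  intros He Hs. destruct L as [|L]. 
  - simpl. rewrite <- S0. apply Series_le; [intros; split; [lra|apply He]|]. now apply ex_series_incr_n.
  - rewrite (Series_incr_n _ (S L)); [| lia | now apply ex_series_incr_n].
    rewrite psum_sum. simpl Init.Nat.pred.
    assert (0 <= Series (fun k => e (s + (S L + k))%nat)).
    { rewrite <- S0. apply Series_le; [intros; split; [lra| apply He]|].
      apply (ex_series_incr_n (fun k => e (s + k)%nat) (S L)). now apply ex_series_incr_n. }
    lra.
Qed.

Lemma psum_tail e s n m : (forall n, 0 <= e n) -> ex_series e -> (s <= n)%nat ->
  psum e n m <= Series (fun t => e (s + t)%nat).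
Proof.
  intros He Hs Hsn.
  pose proof (psum_add e s (n - s) m) as Ha.
  replace (s + (n - s))%nat with n in Ha by lia.
  pose proof (psum_nonneg e s (n - s) He).
  pose proof (psum_le_series e s (n - s + m) He Hs). lra.
Qed.

Lemma exists_phihat {X} (Ft : nat -> X -> Prop) x : liminf_property Ft x ->
  forall k n, exists m, is_phihat Ft x k n m.
Proof.
  intros Hl k n. destruct (Hl k n) as [N [HnN HN]].
  revert HnN HN. induction N as [N IH] using (well_founded_induction Wf_nat.lt_wf). intros HnN HN.
  destruct (classic (exists m', (n <= m')%nat /\ (m' < N)%nat /\ AF Ft k (x m'))) as [[m' [h1 [h2 h3]]]|Hno].
  - exact (IH m' h2 h1 h3).
  - exists N. split; [exact HnN|]. split; [exact HN|].
    intros m' h1 h2 h3. apply Hno. eauto.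
Qed.

Lemma chiM_ge chi g r i n : (i <= n)%nat -> (chi i (g i) r <= chiM chi g n r)%nat.
Proof.
  induction n; intro Hi; simpl.
  - replace i with O by lia. lia.
  - destruct (Nat.eq_dec i (S n)) as [->|Hne]; [lia|].
    specialize (IHn ltac:(lia)). lia.
Qed.

Lemma chiM_mono chi g r n n' : (n <= n')%nat -> (chiM chi g n r <= chiM chi g n' r)%nat.
Proof. induction 1; simpl; lia. Qed.

Lemma Psi_step chi g Phi betaH xi k n :
  (forall k k' n n', (k <= k')%nat -> (n <= n')%nat -> (Phi k n <= Phi k' n')%nat) ->
  (Psi0 chi g Phi betaH xi k n <= Psi0 chi g Phi betaH xi k (S n))%nat.
Proof.
  intro Hm. induction n; [simpl; lia|].
  change (Psi0 chi g Phi betaH xi k (S (S n))) with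
    (Phi (chiM chi g (Psi0 chi g Phi betaH xi k (S n)) (4 * betaH (2 * k + 1) + 3)%nat)
                (xi (4 * betaH (2 * k + 1) + 3)%nat)).
  simpl. apply Hm; [apply chiM_mono; exact IHn| lia].
Qed.

Lemma Psi_mono chi g Phi betaH xi k n n' :
  (forall k k' n n', (k <= k')%nat -> (n <= n')%nat -> (Phi k n <= Phi k' n')%nat) ->
  (n <= n')%nat ->
  (Psi0 chi g Phi betaH xi k n <= Psi0 chi g Phi betaH xi k n')%nat.
Proof.
  intros Hm. induction 1; [lia|]. pose proof (Psi_step chi g Phi betaH xi k m Hm). lia.
Qed.

Theorem theorem6p4 (X : Type) (d : X -> X -> R) (gamma : nat -> nat)
  (F : X -> Prop) (Ft : nat -> X -> Prop)
  (G H : R -> R) (alphaG betaH : nat -> nat)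
  (eps : nat -> R) (xi : nat -> nat)
  (x : nat -> X) (chi : nat -> nat -> nat -> nat) (Phi : nat -> nat -> nat) :
  is_metric d ->
  II_modulus d gamma ->
  (exists p, F p) ->
  (forall p, F p <-> forall k, Ft k p) ->
  (forall a, 0 <= a -> 0 <= G a) ->
  (forall a, 0 <= a -> 0 <= H a) ->
  G_modulus G alphaG ->
  H_modulus H betaH ->
  (forall n, 0 <= eps n) ->
  ex_series eps ->
  cauchy_modulus_series eps xi ->
  unif_quasi_GH_fejer d Ft G H eps x chi ->
  liminf_property Ft x ->
  liminf_bound Ft x Phi ->
  cauchy_seq d x /\
  (forall (k : nat) (g : nat -> nat),
     exists N, (N <= Psi0 chi g Phi betaH xi k (gamma (alphaG (4 * betaH (2 * k + 1) + 3)) + 1))%nat /\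
       forall i j, (N <= i <= N + g N)%nat -> (N <= j <= N + g N)%nat ->
         d (x i) (x j) <= / INR (k + 1)).
Proof.
  intros Hmet Hgam _ _ HG0 HH0 HGm HHm Heps Hser Hxi Hfej Hlim [HPm HPb].
  destruct Hmet as [Hd0 [Hdeq [Hdsym Htri]]].
  assert (Part2 : forall (k : nat) (g : nat -> nat),
     exists N, (N <= Psi0 chi g Phi betaH xi k (gamma (alphaG (4 * betaH (2 * k + 1) + 3)) + 1))%nat /\
       forall i j, (N <= i <= N + g N)%nat -> (N <= j <= N + g N)%nat ->
         d (x i) (x j) <= / INR (k + 1)).
  { intros k g.
    set (K := (4 * betaH (2 * k + 1) + 3)%nat).
    set (Psi := Psi0 chi g Phi betaH xi k).
    assert (Hex : forall n, exists m, (xi K <= m)%nat /\ (m <= Psi (S n))%nat /\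
               AF Ft (chiM chi g (Psi n) K) (x m)).
    { intro n. destruct (exists_phihat Ft x Hlim (chiM chi g (Psi n) K) (xi K)) as [m Hm].
      exists m. destruct Hm as [h1 [h2 h3]]. split; [exact h1|]. split; [|exact h2].
      apply HPb. split; [exact h1|]. split; [exact h2| exact h3]. }
    set (m := fun n => proj1_sig (constructive_indefinite_description _ (Hex n))).
    assert (Hm : forall n, (xi K <= m n)%nat /\ (m n <= Psi (S n))%nat /\
               AF Ft (chiM chi g (Psi n) K) (x (m n))).
    { intro n. unfold m. destruct (constructive_indefinite_description _ (Hex n)) as [v Hv]. exact Hv. }
    destruct (Hgam (alphaG K) (fun n => x (m n))) as [i [j [Hij [Hjg Hdij]]]].
    exists (m i).
    destruct (Hm i) as [Hi1 [Hi2 Hi3]]. destruct (Hm j) as [Hj1 [Hj2 Hj3]].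
    assert (HPsimono := Psi_mono chi g Phi betaH xi k).
    split.
    { pose proof (HPsimono (S i) (gamma (alphaG K) + 1)%nat HPm ltac:(lia)). fold Psi in H0. lia. }
    set (N := m i). set (p := x (m j)).
    assert (HNj : (N <= Psi j)%nat).
    { pose proof (HPsimono (S i) j HPm ltac:(lia)). fold Psi in H0. unfold N. lia. }
    assert (HAF : AF Ft (chi N (g N) K) p).
    { intros l Hl. apply Hj3. pose proof (chiM_ge chi g K N (Psi j) HNj). lia. }
    assert (HGd : G (d (x N) p) <= / INR (K + 1)).
    { apply HGm; [apply Hd0| exact Hdij]. }
    assert (Hps : psum eps N (g N) < / INR (K + 1)).
    { eapply Rle_lt_trans; [apply (psum_tail eps (xi K)); auto | apply Hxi]. }
    assert (HK : / INR (K + 1) = / 4 * / INR (betaH (2 * k + 1) + 1)%nat).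
    { unfold K. generalize (betaH (2 * k + 1)%nat). intro b.
      rewrite !plus_INR, !mult_INR. simpl.
      pose proof (pos_INR b). field. lra. }
    assert (Hb : 0 < / INR (betaH (2 * k + 1) + 1)%nat).
    { apply Rinv_0_lt_compat. apply lt_0_INR. lia. }
    assert (Hclose : forall l, (l <= g N)%nat -> d (x (N + l)%nat) p <= / INR (2 * k + 1 + 1)%nat).
    { intros l Hl. apply HHm; [apply Hd0|].
      pose proof (Hfej N (g N) K p HAF l Hl). lra. }
    assert (Hk2 : / INR (2 * k + 1 + 1)%nat = / 2 * / INR (k + 1)).
    { rewrite !plus_INR, !mult_INR. simpl INR. pose proof (pos_INR k). field. lra. }
    intros a b Ha Hb'.
    pose proof (Hclose (a - N)%nat ltac:(lia)) as Ca.
    pose proof (Hclose (b - N)%nat ltac:(lia)) as Cb.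
    replace (N + (a - N))%nat with a in Ca by lia.
    replace (N + (b - N))%nat with b in Cb by lia.
    pose proof (Htri (x a) p (x b)). rewrite (Hdsym p (x b)) in H0. lra. }
  split; [|exact Part2].
  intros e He.
  apply NNPP. intro Hnot.
  assert (Hall : forall N, exists ij : nat * nat, (N <= fst ij)%nat /\ (N <= snd ij)%nat /\
                   e <= d (x (fst ij)) (x (snd ij))).
  { intro N. apply NNPP. intro Hn. apply Hnot. exists N. intros i j Hi Hj.
    apply Rnot_le_lt. intro Hle. apply Hn. exists (i, j). simpl. auto. }
  set (f := fun N => proj1_sig (constructive_indefinite_description _ (Hall N))).
  assert (Hf : forall N, (N <= fst (f N))%nat /\ (N <= snd (f N))%nat /\
                   e <= d (x (fst (f N))) (x (snd (f N)))).
  { intro N. unfold f. destruct (constructive_indefinite_description _ (Hall N)) as [v Hv]. exact Hv. }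
  destruct (archimed_cor1 e He) as [N0 [HN0 HN0p]].
  destruct (Part2 (N0 - 1)%nat (fun N => (Nat.max (fst (f N)) (snd (f N)) - N)%nat)) as [N [_ HN]].
  destruct (Hf N) as [h1 [h2 h3]].
  pose proof (HN (fst (f N)) (snd (f N)) ltac:(lia) ltac:(lia)).
  replace (N0 - 1 + 1)%nat with N0 in H0 by lia. lra.
Qed.
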